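(* Work in the projective model of $\mathbf{Sol}$ geometry described in the context. Let $P_1=(1,0,0,0)$, $P_2=(1,a,b,c)$ and $P_3=(1,d,e,f)$. For a point $P=(1,x,y,z)$ let $P^i=\mathbf{T}_P^{-1}(P_i)$, i.e. $P^1=(1,-xe^{z},-ye^{-z},-z)$, $P^2=(1,(a-x)e^{z},(b-y)e^{-z},c-z)$, $P^3=(1,(d-x)e^{z},(e-y)e^{-z},f-z)$. Then the translation-like triangular surface $S^{\mathbf{Sol},t}_{P_1,P_2,P_3}$ has the equation \[ 0=\mathbf{t}(P^1)\cdot\mathbf{t}(P^2)\cdot\mathbf{t}(P^3)=\frac{z(z-c)(z-f)}{(1-e^{-z})(e^z-e^c)(e^z-e^f)}\Big((e^z-1)(bde^f-aee^c)+(e^f-1)(aye^c-bxe^z)+(e^c-1)(exe^z-dye^f)\Big), \] where $\mathbf{t}(P^1)\cdot\mathbf{t}(P^2)\cdot\mathbf{t}(P^3)$ denotes the Euclidean triple product (determinant) of the three vectors.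
   Context: $\mathbf{Sol}$ is modelled on $\mathbb{R}^3$ with points in homogeneous coordinates $(1,x,y,z)$. For $Q=(1,q_1,q_2,q_3)$ the translation $\mathbf{T}_Q$ acts on row vectors from the right by the matrix $\begin{pmatrix}1&q_1&q_2&q_3\\0&e^{-q_3}&0&0\\0&0&e^{q_3}&0\\0&0&0&1\end{pmatrix}$, mapping $E_0=(1,0,0,0)$ to $Q$. A translation curve from $E_0$ with unit initial tangent $(u,v,w)$ is $x(t)=-\frac uw(e^{-wt}-1)$, $y(t)=\frac vw(e^{wt}-1)$, $z(t)=wt$ (for $w\ne0$; $x=ut,y=vt,z=0$ if $w=0$); translation curves from $Q$ are their $\mathbf{T}_Q$-images, and the translation distance $d^t(Q,P)$ is the length of the translation curve segment from $Q$ to $P$. For a point $(1,x,y,z)$ with $z\ne0$, $\mathbf{t}(x,y,z):=\big(\frac{xz}{1-e^{-z}},\frac{yz}{e^z-1},z\big)$; this equals $d^t(E_0,(1,x,y,z))$ times the unit initial tangent vector at $E_0$ of the translation curve from $E_0$ to $(1,x,y,z)$. The translation-like triangular surface $S^{\mathbf{Sol},t}_{P_1,P_2,P_3}$ is the set of points $P$ such that the tangent vectors at $P$ of the translation curves from $P$ to $P_1,P_2,P_3$ are coplanar; equivalently (pulling back by $\mathbf{T}_P^{-1}$) such that the vectors $\mathbf{t}(P^1),\mathbf{t}(P^2),\mathbf{t}(P^3)$ are linearly dependent. *)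

(* Defs.v *)
From HB Require Import structures.
From mathcomp Require Import all_boot all_order all_algebra.
From mathcomp Require Import all_classical all_reals all_analysis.
Set Implicit Arguments. Unset Strict Implicit. Unset Printing Implicit Defensive.
Import Order.TTheory GRing.Theory Num.Theory.
Local Open Scope ring_scope.

(* A point (1,x,y,z) of Sol is represented by its affine coordinates (x,y,z). *)
Definition solpt (R : realType) := (R * R * R)%type.
Definition solpt_of (R : realType) (x y z : R) : solpt R := (x, y, z).

(* The translation T_Q (row vector acting from the right by the matrix in the
   context): (1,u,v,w) |-> (1, q1 + u e^{-q3}, q2 + v e^{q3}, q3 + w). *)
Definition sol_translate (R : realType) (Q P : solpt R) : solpt R :=
  let: (q1, q2, q3) := Q in let: (u, v, w) := P in
  (q1 + u * expR (- q3), q2 + v * expR q3, q3 + w).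

Definition sol_translate_inv (R : realType) (Q P : solpt R) : solpt R :=
  let: (q1, q2, q3) := Q in let: (u, v, w) := P in
  ((u - q1) * expR q3, (v - q2) * expR (- q3), w - q3).

(* t(x,y,z) = (x z/(1-e^{-z}), y z/(e^z-1), z), meaningful for z <> 0. *)
Definition tvec (R : realType) (P : solpt R) : 'rV[R]_3 :=
  let: (x, y, z) := P in
  \row_(j < 3) [:: x * z / (1 - expR (- z)); y * z / (expR z - 1); z]`_j.

Definition lin_dep3 (R : realType) (u v w : 'rV[R]_3) : Prop :=
  exists l1 l2 l3 : R, [\/ l1 != 0, l2 != 0 | l3 != 0] /\
    l1 *: u + l2 *: v + l3 *: w = 0.

(* Translation-like triangular surface, via the pulled-back characterization of
   the context: P is on the surface iff t(T_P^{-1} P1), t(T_P^{-1} P2),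
   t(T_P^{-1} P3) are linearly dependent. *)
Definition sol_tl_surface (R : realType) (P1 P2 P3 : solpt R) : solpt R -> Prop :=
  fun P => lin_dep3 (tvec (sol_translate_inv P P1)) (tvec (sol_translate_inv P P2))
                    (tvec (sol_translate_inv P P3)).

Definition triple_prod (R : realType) (u v w : 'rV[R]_3) : R :=
  \det (\matrix_(i < 3, j < 3) [:: u 0 j; v 0 j; w 0 j]`_i).

(* Main.v *)
Require Import Defs.
From HB Require Import structures.
From mathcomp Require Import all_boot all_order all_algebra.
From mathcomp Require Import all_classical all_reals all_analysis.
From mathcomp Require Import ring.
Import Order.TTheory GRing.Theory Num.Theory.
Local Open Scope ring_scope.

Lemma mulM_entry (R : realType) (l u v w : 'rV[R]_3) j :
  (l *m (\matrix_(i < 3, j < 3) [:: u 0 j; v 0 j; w 0 j]`_i)) 0 j =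
  l 0 ord0 * u 0 j + l 0 (lift ord0 ord0) * v 0 j + l 0 (lift ord0 (lift ord0 ord0)) * w 0 j.
Proof. by rewrite !mxE !big_ord_recl big_ord0 !mxE /= addr0 addrA. Qed.

Lemma lindep_det (R : realType) (u v w : 'rV[R]_3) :
  lin_dep3 u v w <-> triple_prod u v w = 0.
Proof.
rewrite /triple_prod; split.
- move=> [l1 [l2 [l3 [Hnz H]]]]; apply/eqP/det0P.
  exists (\row_k [:: l1; l2; l3]`_k).
    case: Hnz => Hn; apply/negP => /eqP /rowP => Hl.
    + by move: (Hl ord0); rewrite !mxE /= => /eqP; rewrite (negbTE Hn).
    + by move: (Hl (lift ord0 ord0)); rewrite !mxE /= => /eqP; rewrite (negbTE Hn).
    + by move: (Hl (lift ord0 (lift ord0 ord0))); rewrite !mxE /= => /eqP; rewrite (negbTE Hn).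
  apply/rowP => j; rewrite mulM_entry !mxE /=.
  by move/rowP: H => /(_ j); rewrite !mxE.
- move/eqP/det0P => [l Hl H0].
  exists (l 0 ord0), (l 0 (lift ord0 ord0)), (l 0 (lift ord0 (lift ord0 ord0))); split.
    case: (eqVneq (l 0 ord0) 0) => [e0|]; last by move=> ?; apply/or3P; rewrite ?eqxx /=; auto.
    case: (eqVneq (l 0 (lift ord0 ord0)) 0) => [e1|]; last by move=> ?; apply: Or32.
    case: (eqVneq (l 0 (lift ord0 (lift ord0 ord0))) 0) => [e2|]; last by move=> ?; apply: Or33.
    exfalso; move/negP: Hl; apply; apply/eqP/rowP => k; rewrite !mxE.
    rewrite (_ : 0 = ord0) //; case: k => [[|[|[|k]]] Hk] //.
    + by rewrite -e0; congr (l _ _); apply: val_inj.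
    + by rewrite -e1; congr (l _ _); apply: val_inj.
    + by rewrite -e2; congr (l _ _); apply: val_inj.
  apply/rowP => j; move/rowP: H0 => /(_ j); rewrite mulM_entry !mxE => <-.
  done.
Qed.


Lemma expR_neq (R : realType) (u v : R) : u != v -> expR u != expR v.
Proof. by apply: contra => /eqP /expR_inj ->. Qed.

Theorem lemma4p2 (R : realType) (a b c d e f x y z : R) :
  z != 0 -> z != c -> z != f ->
  let P1 := solpt_of 0 0 0 in
  let P2 := solpt_of a b c in
  let P3 := solpt_of d e f in
  let P := solpt_of x y z in
  let Pi1 := sol_translate_inv P P1 in
  let Pi2 := sol_translate_inv P P2 in
  let Pi3 := sol_translate_inv P P3 in
  let rhs := z * (z - c) * (z - f)
        / ((1 - expR (- z)) * (expR z - expR c) * (expR z - expR f))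
        * ((expR z - 1) * (b * d * expR f - a * e * expR c)
           + (expR f - 1) * (a * y * expR c - b * x * expR z)
           + (expR c - 1) * (e * x * expR z - d * y * expR f)) in
  [/\ Pi1 = solpt_of (- x * expR z) (- y * expR (- z)) (- z),
      Pi2 = solpt_of ((a - x) * expR z) ((b - y) * expR (- z)) (c - z),
      Pi3 = solpt_of ((d - x) * expR z) ((e - y) * expR (- z)) (f - z),
      triple_prod (tvec Pi1) (tvec Pi2) (tvec Pi3) = rhs &
      (sol_tl_surface P1 P2 P3 P <-> rhs = 0)].
Proof.
move=> hz hc hf P1 P2 P3 P Pi1 Pi2 Pi3 rhs.
have Htp : triple_prod (tvec Pi1) (tvec Pi2) (tvec Pi3) = rhs.
  rewrite /rhs /Pi1 /Pi2 /Pi3 /P /P1 /P2 /P3 /=.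
  rewrite /triple_prod (expand_det_row _ 0) !big_ord_recl big_ord0 /cofactor.
  rewrite !(expand_det_row _ 0) !big_ord_recl !big_ord0 /cofactor !det_mx11 !mxE /=.
  rewrite /bump /= !add0n !addn0 expr0 expr1 expr2.
  rewrite !sub0r opprK !opprB !expRB !expRN.
  have ez : expR z != 0 by rewrite expR_eq0.
  have ec : expR c != 0 by rewrite expR_eq0.
  have ef : expR f != 0 by rewrite expR_eq0.
  have e1 : expR z != 1 by rewrite -expR0 expR_neq.
  have e2 : expR z != expR c by rewrite expR_neq.
  have e3 : expR z != expR f by rewrite expR_neq.
  have e1' : expR z - 1 != 0 by rewrite subr_eq0.
  have e2' : expR z - expR c != 0 by rewrite subr_eq0.
  have e3' : expR z - expR f != 0 by rewrite subr_eq0.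
  have e1'' : 1 - expR z != 0 by rewrite subr_eq0 eq_sym.
  have e2'' : expR c - expR z != 0 by rewrite subr_eq0 eq_sym.
  have e3'' : expR f - expR z != 0 by rewrite subr_eq0 eq_sym.
  field; by rewrite !mulN1r ez ef ec e1' e2' e3' e2'' e3'' e1''.
split => //.
- by rewrite /Pi1 /= !sub0r mulNr.
- by rewrite /sol_tl_surface lindep_det Htp.
Qed.
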